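(* Let $N\ge1$, $0<\alpha\le2$, $\gamma>0$, $p\in[0,1]$, and let $Y\in\mathrm{Herm}(N)$ be an invariant random matrix with characteristic function $$\mathbb E[\exp(i\mathrm{Tr}\,YS)]=\exp\big(-\gamma[p\,\nu_\alpha(\mathrm{Tr}\,S/\sqrt N)+(1-p)\,\nu_\alpha(-\mathrm{Tr}\,S/\sqrt N)]\big),\quad S\in\mathrm{Herm}(N).$$ Then $Y=yI_N/\sqrt N$, where $y$ is a real random variable with the Lévy $\alpha$-stable law given by $\mathbb E[\exp(iyk)]=\exp(-\gamma[p\,\nu_\alpha(k)+(1-p)\,\nu_\alpha(-k)])$, $k\in\mathbb R$.
   Context: $\nu_\alpha(u)=|u|^\alpha(1-i\,\mathrm{sgn}(u)\tan\frac{\pi\alpha}2)$ for $\alpha\ne1$ and $\nu_1(u)=|u|(1+\frac{2i}\pi\mathrm{sgn}(u)\log|u|)$. An invariant random matrix satisfies $UYU^\dagger\overset d=Y$ for all unitary $U$. The equality $Y=yI_N/\sqrt N$ is in distribution. *)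

(* Defs.v *)
From HB Require Import structures.
From mathcomp Require Import all_boot all_order all_algebra.
From mathcomp Require Import all_classical all_reals all_analysis.
From mathcomp Require Import complex.
Set Implicit Arguments. Unset Strict Implicit. Unset Printing Implicit Defensive.
Import Order.TTheory GRing.Theory Num.Theory.
Local Open Scope ring_scope.
Local Open Scope classical_set_scope.
Local Open Scope complex_scope.

Section Defs.
Context (R : realType).
Local Notation C := (R[i]).

Definition cexp (z : C) : C :=
  (expR (complex.Re z))%:C * (cos (complex.Im z) +i* sin (complex.Im z))%C.

Definition nu (alpha u : R) : C :=
  if alpha != 1 then
    (`|u| `^ alpha)%:C * (1 -i* (Num.sg u * tan (pi * alpha / 2)))%C
  else
    (`|u|)%:C * (1 +i* (2 / pi * Num.sg u * ln `|u|))%C.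

Definition stable_exponent (alpha gamma p k : R) : C :=
  - gamma%:C * (p%:C * nu alpha k + (1 - p)%:C * nu alpha (- k)).

Definition ctrmx (N : nat) (A : 'M[C]_N) : 'M[C]_N := map_mx (@conjc R) A^T.
Definition is_hermitian (N : nat) (A : 'M[C]_N) : Prop := ctrmx A = A.
Definition is_unitary (N : nat) (U : 'M[C]_N) : Prop := U *m ctrmx U = 1%:M.

(** Borel sigma-algebra on N x N complex matrices (generated by the real
    and imaginary parts of the entries) *)
Definition mx_gen (N : nat) : set (set 'M[C]_N) :=
  [set A | exists (i j : 'I_N) (B : set R), measurable B /\
     (A = [set M : 'M[C]_N | B (complex.Re (M i j))] \/ A = [set M : 'M[C]_N | B (complex.Im (M i j))])].
Definition mx_measurable (N : nat) (A : set 'M[C]_N) : Prop :=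
  <<s (@mx_gen N) >> A.

Section RandomMatrix.
Context (d : measure_display) (T : measurableType d).

Definition random_matrix (N : nat) (Y : T -> 'M[C]_N) : Prop :=
  forall i j, measurable_fun setT (fun t => complex.Re (Y t i j)) /\
              measurable_fun setT (fun t => complex.Im (Y t i j)).

(** E[exp(i Tr(Y S))] (Tr(Y S) is real for Hermitian Y, S; we take its real part) *)
Definition mx_charfun (P : probability T R) (N : nat) (Y : T -> 'M[C]_N)
    (S : 'M[C]_N) : C :=
  (Rintegral P setT (fun t => cos (complex.Re (\tr (Y t *m S)))) +i*
   Rintegral P setT (fun t => sin (complex.Re (\tr (Y t *m S)))))%C.

Definition unitarily_invariant (P : probability T R) (N : nat) (Y : T -> 'M[C]_N) : Prop :=
  forall U : 'M[C]_N, is_unitary U -> forall A, mx_measurable A ->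
    P ((fun t => U *m Y t *m ctrmx U) @^-1` A) = P (Y @^-1` A).
End RandomMatrix.

Definition real_charfun (mu : probability R R) (k : R) : C :=
  (Rintegral mu setT (fun x => cos (k * x)) +i*
   Rintegral mu setT (fun x => sin (k * x)))%C.

End Defs.

(* Main.v *)
Require Import Defs.
From HB Require Import structures.
From mathcomp Require Import all_boot all_order all_algebra.
From mathcomp Require Import all_classical all_reals all_analysis.
From mathcomp Require Import complex.
From mathcomp Require Import ring lra measurable_realfun.
Import Order.TTheory GRing.Theory Num.Theory.
Local Open Scope ring_scope.
Local Open Scope classical_set_scope.
Local Open Scope complex_scope.

Section H.
Context (R : realType).
Local Notation C := R[i].

Lemma cexp0 : cexp (0 : C) = 1.
Proof. by rewrite /cexp /= expR0 cos0 sin0 mul1r. Qed.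

Lemma nu0 (a : R) : 0 < a -> nu a 0 = 0.
Proof.
move=> a0; rewrite /nu normr0; case: ifP => _.
  by rewrite powR0 ?gt_eqF // mul0r.
by rewrite mul0r.
Qed.

Lemma stable0 (a g p : R) : 0 < a -> stable_exponent a g p 0 = 0.
Proof. by move=> a0; rewrite /stable_exponent oppr0 nu0 // !mulr0 addr0 mulr0. Qed.
End H.

Section H.
Context (R : realType) (N : nat).
Local Notation C := R[i].
Local Notation Re := complex.Re.
Local Notation Im := complex.Im.
Local Notation cj := (@conjc R).

Lemma cReM (x y : C) : Re (x * y) = Re x * Re y - Im x * Im y.
Proof. by case: x => ? ?; case: y => ? ?. Qed.
Lemma cImM (x y : C) : Im (x * y) = Re x * Im y + Im x * Re y.
Proof. by case: x => ? ?; case: y => ? ?. Qed.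
Lemma cReMr (r : R) (z : C) : Re (r%:C * z) = r * Re z.
Proof. by rewrite cReM /= mul0r subr0. Qed.

Lemma cjB (x y : C) : cj (x - y) = cj x - cj y. Proof. exact: rmorphB. Qed.
Lemma cjD (x y : C) : cj (x + y) = cj x + cj y. Proof. exact: rmorphD. Qed.
Lemma cjM (x y : C) : cj (x * y) = cj x * cj y. Proof. exact: rmorphM. Qed.
Lemma cjMn (x : C) n : cj (x *+ n) = cj x *+ n. Proof. exact: rmorphMn. Qed.
Lemma cjn n : cj (n%:R) = n%:R. Proof. exact: rmorph_nat. Qed.

Definition Emx (i j : nat) : 'M[C]_N := \matrix_(a, b) (((a:nat) == i) && ((b:nat) == j))%:R.
Definition Smx1 i j := Emx i j + Emx j i.
Definition Smx2 i j := 'i *: Emx i j - 'i *: Emx j i.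
Definition Trl (S : 'M[C]_N) := S - ((Re (\tr S) / N%:R)%:C)%:M.
Definition Fam (m i j : nat) (b : bool) :=
  ((m.+1%:R)^-1 : R)%:C *: Trl (if b then Smx1 i j else Smx2 i j).

Lemma trEmx (A : 'M[C]_N) (i j : 'I_N) : \tr (A *m Emx i j) = A j i.
Proof.
rewrite /mxtrace (bigD1 j) //= big1 ?addr0.
  rewrite mxE (bigD1 i) //= big1 ?addr0; first by rewrite mxE !eqxx mulr1.
  move=> b bi; rewrite mxE.
  suff -> : ((b : nat) == i) = false by rewrite mulr0.
  by apply/negbTE.
move=> a aj; rewrite mxE big1 // => b _; rewrite mxE.
suff -> : ((a : nat) == j) = false by rewrite andbF mulr0.
by apply/negbTE.
Qed.

Lemma ctrmxE (A : 'M[C]_N) i j : ctrmx A i j = cj (A j i).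
Proof. by rewrite /ctrmx !mxE. Qed.

Lemma herm_S1 i j : is_hermitian (Smx1 i j).
Proof.
apply/matrixP => a b; rewrite ctrmxE !mxE rmorphD /= !conjc_nat addrC.
by congr (_ + _); rewrite andbC.
Qed.

Lemma herm_S2 i j : is_hermitian (Smx2 i j).
Proof.
apply/matrixP => a b; rewrite ctrmxE !mxE rmorphB rmorphM /= !conjc_nat.
rewrite rmorphM /= conjc_nat.
have -> : (Complex 0 (-1) : C) = - 'i.
  by apply/eqP; rewrite eq_complex /= oppr0 !eqxx.
rewrite !mulNr opprK addrC.
by rewrite (andbC (nat_of_ord b == i)) (andbC (nat_of_ord b == j)).
Qed.

Lemma herm_Tr (S : 'M[C]_N) : is_hermitian S -> is_hermitian (Trl S).
Proof.
move=> hS; apply/matrixP => a b; rewrite ctrmxE !mxE cjB.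
by rewrite -ctrmxE hS cjMn conjc_real eq_sym.
Qed.

Lemma herm_scale (r : R) (S : 'M[C]_N) : is_hermitian S -> is_hermitian (r%:C *: S).
Proof.
move=> hS; apply/matrixP => a b; rewrite ctrmxE !mxE cjM conjc_real.
by rewrite -ctrmxE hS.
Qed.

Lemma Retr_Tr (S : 'M[C]_N) : (0 < N)%N -> Re (\tr (Trl S)) = 0.
Proof.
move=> N0; rewrite /Trl raddfB /= mxtrace_scalar raddfB /= raddfMn /=.
by rewrite -[X in _ - X]mulr_natr divfK ?subrr // pnatr_eq0 -lt0n.
Qed.

Lemma herm_Fam m i j b : is_hermitian (Fam m i j b).
Proof. by apply: herm_scale; apply: herm_Tr; case: b; [apply: herm_S1|apply: herm_S2]. Qed.

Lemma Retr_Fam m i j b : (0 < N)%N -> Re (\tr (Fam m i j b)) = 0.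
Proof. by move=> N0; rewrite /Fam mxtraceZ cReMr Retr_Tr // mulr0. Qed.

Lemma Xscale (A S : 'M[C]_N) r :
  Re (\tr (A *m (r%:C *: S))) = r * Re (\tr (A *m S)).
Proof. by rewrite -scalemxAr mxtraceZ cReMr. Qed.

Lemma XTr (A S : 'M[C]_N) :
  Re (\tr (A *m Trl S)) = Re (\tr (A *m S)) - Re (\tr S) / N%:R * Re (\tr A).
Proof. by rewrite /Trl mulmxBr mul_mx_scalar raddfB /= mxtraceZ raddfB /= cReMr. Qed.

Lemma trEmx1 (i j : 'I_N) : \tr (Emx i j) = (j == i)%:R.
Proof. by rewrite -[Emx i j]mul1mx trEmx mxE. Qed.

Lemma scalar_of (A : 'M[C]_N) : is_hermitian A ->
  (forall (i j : nat) (b : bool), Re (\tr (A *m Trl (if b then Smx1 i j else Smx2 i j))) = 0) ->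
  A = ((Re (\tr A) / N%:R)%:C)%:M.
Proof.
move=> hA H; apply/matrixP => i j.
have h1 := H i j true; have h2 := H i j false.
rewrite XTr /Smx1 mulmxDr !raddfD /= !trEmx !trEmx1 in h1.
rewrite XTr /Smx2 mulmxBr -!scalemxAr !raddfB /= !mxtraceZ !trEmx !trEmx1 in h2.
have Aji : A j i = cj (A i j) by rewrite -ctrmxE hA.
rewrite Aji in h1 h2; rewrite mxE (eq_sym j i) in h1 h2 *.
rewrite !cReM in h2.
move: h1 h2; set c := Re (\tr A) / N%:R; set tA := Re (\tr A).
case: (A i j) => a b; case: (i == j) => /= h1 h2.
  rewrite mulr1n; rewrite mulrAC -mulrA -/c in h1.
  by congr Complex; lra.
rewrite mulr0n; congr Complex; lra.
Qed.
End H.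
Set Implicit Arguments. Unset Strict Implicit.

Section M.
Context (R : realType) (d : measure_display) (T : measurableType d)
  (P : probability T R) (N : nat) (Y : T -> 'M[R[i]]_N).
Local Notation C := R[i].
Local Notation Re := complex.Re.
Local Notation Im := complex.Im.
Hypothesis hY : random_matrix Y.

Lemma X_expand (A S : 'M[C]_N) : Re (\tr (A *m S)) =
  \sum_a \sum_b (Re (A a b) * Re (S b a) - Im (A a b) * Im (S b a)).
Proof.
rewrite /mxtrace raddf_sum; apply: eq_bigr => a _.
rewrite mxE raddf_sum; apply: eq_bigr => b _; rewrite /=; exact: cReM.
Qed.

Lemma measX S : measurable_fun setT (fun t => Re (\tr (Y t *m S))).
Proof.
rewrite (_ : (fun t => _) = fun t => \sum_a \sum_b
   (Re (Y t a b) * Re (S b a) - Im (Y t a b) * Im (S b a))); last first.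
  by apply/funext => t; rewrite X_expand.
apply: measurable_sum => a; apply: measurable_sum => b.
apply: measurable_funB; apply: measurable_funM; try exact: measurable_cst.
  exact: (hY a b).1.
exact: (hY a b).2.
Qed.

Lemma meascosX S : measurable_fun setT (fun t => cos (Re (\tr (Y t *m S)))).
Proof. exact: (measurableT_comp (continuous_measurable_fun (@continuous_cos R)) (measX S)). Qed.

Lemma intcos (f : T -> R) : measurable_fun setT f ->
  P.-integrable setT (EFin \o (fun t => cos (f t))).
Proof.
move=> mf; apply: measurable_bounded_integrable => //.
- exact: (le_lt_trans (probability_le1 P measurableT) (ltry 1)).
- by apply: measurableT_comp => //; exact: continuous_measurable_fun (@continuous_cos R).
- rewrite /bounded_near; near=> M => t _ /=; apply: le_trans (cos_max _) _.
  by near: M; exact: nbhs_pinfty_ge.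
Unshelve. all: end_near. Qed.

Lemma intsin (f : T -> R) : measurable_fun setT f ->
  P.-integrable setT (EFin \o (fun t => sin (f t))).
Proof.
move=> mf; apply: measurable_bounded_integrable => //.
- exact: (le_lt_trans (probability_le1 P measurableT) (ltry 1)).
- by apply: measurableT_comp => //; exact: continuous_measurable_fun (@continuous_sin R).
- rewrite /bounded_near; near=> M => t _ /=; apply: le_trans (sin_max _) _.
  by near: M; exact: nbhs_pinfty_ge.
Unshelve. all: end_near. Qed.

Lemma null_of_int1 (f : T -> R) : measurable_fun setT f ->
  P.-integrable setT (EFin \o f) -> (forall t, f t <= 1) ->
  Rintegral P setT f = 1 -> P.-negligible [set t | f t != 1].
Proof.
move=> mf intf f1 If.
have mg : measurable_fun setT (fun t => ((1 - f t)%:E)).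
  by apply/measurable_EFinP; apply: measurable_funB => //; exact: measurable_cst.
have : (\int[P]_(x in setT) `|(1 - f x)%:E| = 0)%E.
  transitivity (\int[P]_(x in setT) ((1%:E) - (f x)%:E))%E.
    apply: eq_integral => t _; rewrite gee0_abs ?lee_fin ?subr_ge0 //.
  rewrite integralB_EFin //; last exact: finite_measure_integrable_cst.
  rewrite [X in (X - _)%E](integral_cst P measurableT 1) mul1e.
  have -> : (\int[P]_(x in setT) (f x)%:E = 1)%E.
    by rewrite -If /Rintegral fineK //; exact: integrable_fin_num.
  transitivity ((1%:E : \bar R) - 1%:E)%E; last by rewrite subee.
  exact: (congr1 (fun x => (x - 1%:E)%E) (probability_setT P)).
move/(ae_eq_integral_abs _ measurableT mg) => [M [mM M0 sub]].
exists M; split => // t /= ft; apply: sub => /= /(_ I) [] /eqP.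
by rewrite subr_eq0 eq_sym (negbTE ft).
Qed.
End M.


Unset Implicit Arguments. Set Strict Implicit.

Lemma cos_all (R : realType) (x : R) :
  (forall m : nat, cos ((m.+1%:R)^-1 * x) = 1) -> x = 0.
Proof.
move=> H; apply/eqP; apply/negP => /negP x0.
have pi0 : (0 : R) < pi := pi_gt0 R.
have hb := archi_boundP (divr_ge0 (normr_ge0 x) (ltW pi0)).
move: hb; set m := Num.bound _ => hb.
have K0 : (0 : R) < m.+1%:R by rewrite ltr0n.
have h1 : `|x| < m%:R * pi by rewrite -ltr_pdivrMr.
set y := (m.+1%:R)^-1 * x.
have hy : `|y| < pi.
  rewrite /y normrM ger0_norm ?invr_ge0 ?ltW // mulrC ltr_pdivrMr //.
  apply: (lt_le_trans h1); rewrite mulrC ler_pM2l // ler_nat; exact: leqnSn.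
have y0 : y != 0 by rewrite mulf_neq0 // invr_eq0 gt_eqF.
have s0 : sin y = 0 by apply: cos1sin0; rewrite H normr1.
case: (ltrgt0P y) => [yp|yn|/eqP]; last by rewrite (negbTE y0).
  suff : 0 < sin y by rewrite s0 ltxx.
  by apply: sin_gt0_pi; rewrite yp /= -(gtr0_norm yp).
suff : 0 < sin (- y) by rewrite sinN s0 oppr0 ltxx.
by apply: sin_gt0_pi; rewrite oppr_gt0 yn /= -(ltr0_norm yn).
Qed.

Section Main.
Context (R : realType) (d : measure_display) (T : measurableType d)
  (P : probability T R) (N : nat).
Local Notation C := R[i].
Local Notation Re := complex.Re.

Lemma meas_preimage (Y : T -> 'M[C]_N) (A : set 'M[C]_N) :
  random_matrix Y -> mx_measurable A -> measurable (Y @^-1` A).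
Proof.
move=> hY mA.
have sig := sigma_algebra_image (D := setT) Y (@sigma_algebra_measurable _ T).
suff : image_set_system setT Y measurable A by rewrite /image_set_system /= setTI.
apply: mA; split => //.
move=> _ [i [j [B [mB [->|->]]]]]; rewrite /image_set_system /=.
- exact ((hY i j).1 measurableT B mB).
- exact ((hY i j).2 measurableT B mB).
Qed.

Lemma eq_measure_ae (mu : {measure set T -> \bar R}) (D1 D2 B : set T) : measurable D1 -> measurable D2 ->
  mu.-negligible B -> (forall t, ~ B t -> (D1 t <-> D2 t)) -> mu D1 = mu D2.
Proof.
move=> m1 m2 [M [mM M0 BM]] H.
rewrite (measureDI mu m1 mM) (measureDI mu m2 mM).
have -> : D1 `\` M = D2 `\` M.
  apply/seteqP; split => t [Dt Mt]; split => //; apply/(H t) => // Bt; exact: Mt (BM _ Bt).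
have z (D : set T) : measurable D -> mu (D `&` M) = 0%E.
  move=> mD; apply/eqP; rewrite -measure_le0 -M0; apply: le_measure; rewrite ?inE //.
  exact: measurableI.
congr (_ + _)%E; exact: (etrans (z _ m1) (esym (z _ m2))).
Qed.

Lemma null_bad (Y : T -> 'M[C]_N) (alpha gamma p : R) (S : 'M[C]_N) :
  random_matrix Y -> 0 < alpha -> Re (\tr S) = 0 ->
  mx_charfun P Y S = cexp (stable_exponent alpha gamma p (Re (\tr S) / Num.sqrt N%:R)) ->
  P.-negligible [set t | cos (Re (\tr (Y t *m S))) != 1].
Proof.
move=> hY a0 trS hc.
apply: (null_of_int1 (meascosX hY S) (intcos P (measX hY S)) (fun t => cos_le1 _)).
move: hc; rewrite trS mul0r stable0 // cexp0 => /(congr1 (@complex.Re R)).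
by [].
Qed.

Lemma Rint_push (f : {mfun T >-> R}) (g : R -> R) : measurable_fun setT g ->
  P.-integrable setT (EFin \o (fun t => g (f t))) ->
  Rintegral (distribution P f) setT g = Rintegral P setT (fun t => g (f t)).
Proof.
move=> mg ig; rewrite /Rintegral integral_distribution //.
exact/measurable_EFinP.
Qed.
End Main.

Theorem corollary4p8 (R : realType) (N : nat) (alpha gamma p : R)
  (d : measure_display) (T : measurableType d) (P : probability T R)
  (Y : T -> 'M[R[i]]_N) :
  (0 < N)%N -> 0 < alpha <= 2 -> 0 < gamma -> 0 <= p <= 1 ->
  random_matrix Y -> (forall t, is_hermitian (Y t)) -> unitarily_invariant P Y ->
  (forall S : 'M[R[i]]_N, is_hermitian S ->
     mx_charfun P Y S =
     cexp (stable_exponent alpha gamma p (complex.Re (\tr S) / Num.sqrt N%:R))) ->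
  exists mu : probability R R,
    (forall k : R, real_charfun mu k = cexp (stable_exponent alpha gamma p k)) /\
    (forall A : set 'M[R[i]]_N, mx_measurable A ->
       P (Y @^-1` A) = mu [set y | A ((y / Num.sqrt N%:R)%:C)%:M]).
Proof.
move=> N0 /andP[a0 _] _ _ hY hH _ hc.
set sN := Num.sqrt (N%:R : R).
have sN0 : 0 < sN by rewrite sqrtr_gt0 ltr0n.
have sN2 : sN * sN = N%:R by rewrite -expr2 sqr_sqrtr // ler0n.
pose f := fun t => complex.Re (\tr (Y t)) / sN.
have mf : measurable_fun setT f.
  apply: measurable_funM; last exact: measurable_cst.
  rewrite (_ : (fun t => _) = fun t => complex.Re (\tr (Y t *m 1%:M))).
    exact: measX.
  by apply/funext => t; rewrite mulmx1.
pose F : {mfun T >-> R} := mfun_Sub (mem_set mf).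
exists (distribution P F); split.
- move=> k.
  pose S : 'M[R[i]]_N := ((k / sN)%:C)%:M.
  have hS : is_hermitian S.
    by apply/matrixP => a b; rewrite ctrmxE !mxE cjMn conjc_real eq_sym.
  have := hc S hS.
  have -> : complex.Re (\tr S) / sN = k.
    rewrite mxtrace_scalar raddfMn /= -mulr_natr -sN2.
    by field; rewrite gt_eqF.
  move <-.
  have eX t : complex.Re (\tr (Y t *m S)) = k * F t.
    by rewrite mul_mx_scalar mxtraceZ cReMr /= /f mulrAC -mulrA.
  have mkF : measurable_fun setT (fun t => k * F t).
    by apply: measurable_funM => //; exact: measurable_cst.
  rewrite /real_charfun /mx_charfun; congr Complex.
  + rewrite Rint_push //; last exact: intcos.
      by apply: eq_Rintegral => t _; rewrite eX.
    by apply: measurableT_comp => //; exact: continuous_measurable_fun (@continuous_cos R).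
  + rewrite Rint_push //; last exact: intsin.
      by apply: eq_Rintegral => t _; rewrite eX.
    by apply: measurableT_comp => //; exact: continuous_measurable_fun (@continuous_sin R).
- move=> A mA.
  pose Z := fun t => ((f t / sN)%:C)%:M : 'M[R[i]]_N.
  have hZ : random_matrix Z.
    move=> i j; split.
    + rewrite (_ : (fun t => _) = fun t => if i == j then f t / sN else 0).
        case: (i == j); last exact: measurable_cst.
        by apply: measurable_funM => //; exact: measurable_cst.
      by apply/funext => t; rewrite /Z mxE raddfMn /=; case: (i == j).
    + rewrite (_ : (fun t => _) = fun _ => 0); first exact: measurable_cst.
      by apply/funext => t; rewrite /Z mxE raddfMn /= mul0rn.
  pose X S t := complex.Re (\tr (Y t *m S)).
  pose B := \bigcup_m \bigcup_i \bigcup_j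
    ([set t | cos (X (Fam R N m i j true) t) != 1] `|`
     [set t | cos (X (Fam R N m i j false) t) != 1]).
  have nB : P.-negligible B.
    apply: negligible_bigcup => m; apply: negligible_bigcup => i.
    apply: negligible_bigcup => j.
    by apply: negligibleU; apply: (@null_bad R d T P N Y alpha gamma p _ hY a0 (Retr_Fam R N _ _ _ _ N0));
      apply: hc; exact: herm_Fam.
  change (P (Y @^-1` A) = P (Z @^-1` A)).
  apply: (@eq_measure_ae R d T P _ _ B (meas_preimage R d T N Y A hY mA) (meas_preimage R d T N Z A hZ mA) nB).
move=> t nBt; rewrite /preimage /=; suff -> : Y t = Z t by [].
  rewrite [LHS](@scalar_of R N (Y t) (hH t)).
    by rewrite /Z /f -mulrA -invfM sN2.
  move=> i j b; apply: cos_all => m.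
  rewrite -Xscale; apply/eqP; case: eqP => // /eqP hne; exfalso; apply: nBt.
  exists m => //; exists i => //; exists j => //.
  by case: b hne => h; [left|right].
Qed.
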